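(* In the random-feature Dense Associative Memory procedure described in the context, the subroutine GradComp$(\tau,\mathbf{T},\mathbf{x})$, which on input a seed $\tau$, a distributed memory vector $\mathbf{T}\in\mathbb{R}^Y$ and an input $\mathbf{x}\in\mathbb{R}^D$ returns the approximate energy gradient $\nabla_{\mathbf{x}}\hat E(\mathbf{x})$, takes $O(D(Y+D))$ time and $O(D+Y)$ peak memory.
   Context: Setting: $\mathbf{g}:\mathbb{R}^D\to\mathbb{R}^D$ is a differentiable vector function, $Q$ a differentiable scalar function, and $\boldsymbol{\varphi}:\mathbb{R}^D\to\mathbb{R}^Y$ a random feature map consisting of $Y$ random features $\varphi_\alpha$, each determined by a random projection vector $\boldsymbol{\omega}^\alpha\in\mathbb{R}^D$ and evaluated as a scalar function of $\langle\boldsymbol{\omega}^\alpha,\mathbf{x}\rangle$; the random vectors are generated from a random number generator with fixed seed $\tau$ and regenerated on demand. Given memories $\boldsymbol{\xi}^\mu$, the distributed memory is $\mathbf{T}=\sum_\mu\boldsymbol{\varphi}(\boldsymbol{\xi}^\mu)$ and the approximate energy is $\hat E(\mathbf{x})=-Q(\langle\mathbf{T},\boldsymbol{\varphi}(\mathbf{g}(\mathbf{x}))\rangle)$, with gradient $\nabla_{\mathbf{x}}\hat E = -Q'(\langle\boldsymbol{\varphi}(\mathbf{g}(\mathbf{x})),\mathbf{T}\rangle)\,\big(\frac{d\boldsymbol{\varphi}(\mathbf{z})}{d\mathbf{z}}\big|_{\mathbf{z}=\mathbf{g}(\mathbf{x})}^\top\mathbf{T}\big)\frac{d\mathbf{g}(\mathbf{x})}{d\mathbf{x}}$.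 Subroutine RF$(\tau,\boldsymbol{\xi})$ resets the generator to seed $\tau$ and returns $(\varphi_\alpha(\boldsymbol{\xi}))_{\alpha=1}^Y$. Subroutine GradComp$(\tau,\mathbf{T},\mathbf{x})$: $\mathbf{p}\gets\mathrm{RF}(\tau,\mathbf{g}(\mathbf{x}))$; $\mathbf{z}\gets 0_D$; for $i=1,\dots,D$: compute $\mathbf{u}\gets \partial\boldsymbol{\varphi}(\mathbf{y})/\partial y_i|_{\mathbf{y}=\mathbf{g}(\mathbf{x})}\in\mathbb{R}^Y$ and set $z_i\gets\langle\mathbf{u},\mathbf{T}\rangle$; $\mathbf{z}'\gets 0_D$; for $i=1,\dots,D$: compute $\mathbf{y}\gets\partial\mathbf{g}(\mathbf{x})/\partial x_i\in\mathbb{R}^D$ and set $z'_i\gets\langle\mathbf{y},\mathbf{z}\rangle$; compute $q\gets -Q'(\langle\mathbf{T},\mathbf{p}\rangle)$; return $q\,\mathbf{z}'$. Complexity counts arithmetic operations and stored real numbers, with sampling a scalar random number, evaluating scalar elementary functions, and evaluating an entry of $\mathbf{g}$ or of its Jacobian at unit cost. *)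

(* Defs.v *)
From HB Require Import structures.
From mathcomp Require Import all_boot all_order all_algebra.
From mathcomp Require Import reals.
Set Implicit Arguments. Unset Strict Implicit. Unset Printing Implicit Defensive.
Import Order.TTheory GRing.Theory Num.Theory.
Local Open Scope ring_scope.

(* Cost monad: counts unit-cost operations and stored real numbers.   *)
(* live = number of real numbers currently stored (arrays)            *)
Record cstate := CState { ops : nat; live : nat; peak : nat }.

Definition M (A : Type) := cstate -> A * cstate.
Definition ret {A} (a : A) : M A := fun s => (a, s).
Definition bind {A B} (m : M A) (f : A -> M B) : M B :=
  fun s => let (a, s') := m s in f a s'.
Notation "'mlet' x := m 'in' k" := (bind m (fun x => k))
  (at level 200, x name, m at level 100, k at level 200).

Definition tick : M unit :=
  fun s => (tt, CState (ops s).+1 (live s) (peak s)).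
Definition alloc (n : nat) : M unit :=
  fun s => (tt, CState (ops s) (live s + n) (maxn (peak s) (live s + n))).
Definition free (n : nat) : M unit :=
  fun s => (tt, CState (ops s) (live s - n) (peak s)).

Definition prim {A} (a : A) : M A := mlet _ := tick in ret a.

Definition run {A} (m : M A) : A * cstate := m (CState 0 0 0).

Section Model.
Variable R : realType.

Definition addM (a b : R) : M R := prim (a + b).
Definition mulM (a b : R) : M R := prim (a * b).
Definition oppM (a : R) : M R := prim (- a).

Fixpoint mapM {A B} (f : A -> M B) (l : seq A) : M (seq B) :=
  match l with
  | [::] => ret [::]
  | a :: l' => mlet b := f a in mlet bs := mapM f l' in ret (b :: bs)
  end.

Fixpoint sumL {A} (f : A -> M R) (l : seq A) (acc : R) : M R :=
  match l with
  | [::] => ret acc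
  | a :: l' => mlet v := f a in mlet acc' := addM acc v in sumL f l' acc'
  end.

Definition sumOrd (n : nat) (f : 'I_n -> M R) : M R := sumL f (enum 'I_n) 0.

Definition tabulate (n : nat) (f : 'I_n -> M R) : M 'rV[R]_n :=
  mlet _ := alloc n in
  mlet l := mapM f (enum 'I_n) in
  ret (\row_i nth 0 l i).

(* The data of the procedure (unit-cost oracles).
   - rf_omega tau a j : the j-th entry of the random projection vector
     omega^a generated by the random number generator with seed tau
     (regenerated on demand; drawing one scalar has unit cost);
   - rf_h a : the scalar function with phi_a(x) = rf_h a <omega^a, x>;
   - rf_dh a : its derivative (used for d phi / d z);
   - rf_g : the vector function g, rf_Jg x j i = d g_j / d x_i (x);
   - rf_dQ : Q'. *)
Record RFModel (D Y : nat) := {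
  rf_omega : nat -> 'I_Y -> 'I_D -> R;
  rf_h : 'I_Y -> R -> R;
  rf_dh : 'I_Y -> R -> R;
  rf_g : 'rV[R]_D -> 'rV[R]_D;
  rf_Jg : 'rV[R]_D -> 'M[R]_D;
  rf_dQ : R -> R
}.

Variables (D Y : nat) (P : RFModel D Y).

Definition sample (tau : nat) (a : 'I_Y) (j : 'I_D) : M R := prim (rf_omega P tau a j).
Definition evalh (a : 'I_Y) (t : R) : M R := prim (rf_h P a t).
Definition evaldh (a : 'I_Y) (t : R) : M R := prim (rf_dh P a t).
Definition evaldQ (t : R) : M R := prim (rf_dQ P t).
Definition evalg (x : 'rV[R]_D) (j : 'I_D) : M R := prim (rf_g P x 0 j).
Definition evalJ (x : 'rV[R]_D) (j i : 'I_D) : M R := prim (rf_Jg P x j i).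

(* RF(tau, y): regenerate omega^1..omega^Y from seed tau, one scalar at a
   time (omega^a is consumed, not stored), computing the projections
   s_a = <omega^a, y> and the features p_a = phi_a(y) = h_a(s_a). *)
Definition RF_core (tau : nat) (y : 'rV[R]_D) : M ('rV[R]_Y * 'rV[R]_Y) :=
  mlet s := tabulate (fun a : 'I_Y =>
              sumOrd (fun j : 'I_D => mlet w := sample tau a j in mulM w (y 0 j))) in
  mlet p := tabulate (fun a : 'I_Y => evalh a (s 0 a)) in
  ret (s, p).

Definition RF (tau : nat) (y : 'rV[R]_D) : M 'rV[R]_Y :=
  mlet sp := RF_core tau y in ret sp.2.

Definition GradComp (tau : nat) (T : 'rV[R]_Y) (x : 'rV[R]_D) : M 'rV[R]_D :=
  mlet y := tabulate (fun j : 'I_D => evalg x j) in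
  mlet sp := RF_core tau y in
  let s := sp.1 in let p := sp.2 in
  (* z_i = < d phi(y) / d y_i , T >, with (d phi / d y_i)_a = h_a'(s_a) omega^a_i *)
  mlet z := tabulate (fun i : 'I_D =>
     mlet u := tabulate (fun a : 'I_Y =>
                 mlet d := evaldh a (s 0 a) in
                 mlet w := sample tau a i in mulM d w) in
     mlet zi := sumOrd (fun a : 'I_Y => mulM (u 0 a) (T 0 a)) in
     mlet _ := free Y in ret zi) in
  mlet z' := tabulate (fun i : 'I_D =>
     mlet yv := tabulate (fun j : 'I_D => evalJ x j i) in
     mlet zi := sumOrd (fun j : 'I_D => mulM (yv 0 j) (z 0 j)) in
     mlet _ := free D in ret zi) in
  mlet tp := sumOrd (fun a : 'I_Y => mulM (T 0 a) (p 0 a)) in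
  mlet dq := evaldQ tp in
  mlet q := oppM dq in
  tabulate (fun i : 'I_D => mulM q (z' 0 i)).

(* The approximate energy gradient
   - Q'(<phi(g x), T>) (d phi/dz|_{g x}^T T) (d g / d x), written out. *)
Definition grad_formula (tau : nat) (T : 'rV[R]_Y) (x : 'rV[R]_D) : 'rV[R]_D :=
  let s := fun a : 'I_Y => \sum_(j < D) rf_omega P tau a j * rf_g P x 0 j in
  \row_(i < D)
    (- rf_dQ P (\sum_(a < Y) T 0 a * rf_h P a (s a)) *
     \sum_(j < D) rf_Jg P x j i *
        \sum_(a < Y) rf_dh P a (s a) * rf_omega P tau a j * T 0 a).

End Model.

(* Main.v *)
Require Import Defs.
From HB Require Import structures.
From mathcomp Require Import all_boot all_order all_algebra.
From mathcomp Require Import reals zify.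
Set Implicit Arguments. Unset Strict Implicit. Unset Printing Implicit Defensive.
Import Order.TTheory GRing.Theory Num.Theory.
Local Open Scope ring_scope.

Definition spec {A} (m : M A) (a : A) (k dl p : nat) :=
  forall s, (live s <= peak s)%N -> let r := m s in
  [/\ r.1 = a, (ops r.2 <= ops s + k)%N, live r.2 = (live s + dl)%N,
      (peak r.2 <= maxn (peak s) (live s + p))%N & (live r.2 <= peak r.2)%N].

Lemma spec_ret A (a : A) : spec (ret a) a 0 0 0.
Proof. move=> [o l p] /= H; split => //=; lia. Qed.

Lemma spec_prim A (a : A) : spec (prim a) a 1 0 0.
Proof. move=> [o l p] /= H; split => //=; lia. Qed.

Lemma spec_weak A (m : M A) a k dl p k' dl' p' : spec m a k dl p -> (k <= k')%N -> dl = dl' -> (p <= p')%N ->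
  spec m a k' dl' p'.
Proof. move=> H hk <- hp s hs; case: (H s hs) => h1 h2 h3 h4 h5; split => //; lia. Qed.

Lemma spec_bind A B (m : M A) (f : A -> M B) a b k1 d1 p1 k2 d2 p2 :
  spec m a k1 d1 p1 -> spec (f a) b k2 d2 p2 ->
  spec (bind m f) b (k1 + k2) (d1 + d2) (maxn p1 (d1 + p2)).
Proof.
move=> H1 H2 s hs; rewrite /bind.
case E: (m s) => [a' s1]. case: (H1 s hs); rewrite E /= => -> o1 l1 pk1 i1.
case E2: (f a s1) => [b' s2]. case: (H2 s1 i1); rewrite E2 /= => -> o2 l2 pk2 i2.
split => //; lia.
Qed.

Lemma spec_free_pat A B (m : M A) (f : A -> M B) a b k n p k2 p2 :
  spec m a k n p -> spec (f a) b k2 0 p2 ->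
  spec (bind m (fun x => bind (f x) (fun y => bind (Defs.free n) (fun _ => ret y)))) b
    (k + k2) 0 (maxn p (n + p2)).
Proof.
move=> H1 H2 s hs; rewrite /bind.
case E: (m s) => [a' s1]. case: (H1 s hs); rewrite E /= => -> o1 l1 pk1 i1.
case E2: (f a s1) => [b' s2]. case: (H2 s1 i1); rewrite E2 /= => -> o2 l2 pk2 i2.
rewrite /Defs.free /ret /=; split => //=; lia.
Qed.

Lemma spec_alloc n : spec (alloc n) tt 0 n n.
Proof. move=> [o l p] /= H; split => //=; lia. Qed.

Lemma spec_mapM A B (f : A -> M B) (g : A -> B) k p (l : seq A) :
  (forall x, spec (f x) (g x) k 0 p) -> spec (mapM f l) (map g l) (k * size l) 0 p.
Proof.
move=> H; elim: l => [|x l IH] /=.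
  by apply: spec_weak (spec_ret _) _ _ _.
apply: spec_weak.
  apply: spec_bind (H x) _. apply: spec_bind IH _. exact: spec_ret.
all: lia.
Qed.

Lemma foldl_sum (R : realType) A (g : A -> R) (l : seq A) acc :
  foldl (fun a x => a + g x) acc l = acc + \sum_(x <- l) g x.
Proof.
elim: l acc => [|x l IH] acc /=; first by rewrite big_nil addr0.
by rewrite IH big_cons addrA.
Qed.

Lemma spec_sumL (R : realType) A (f : A -> M R) (g : A -> R) k (l : seq A) acc :
  (forall x, spec (f x) (g x) k 0 0) ->
  spec (sumL f l acc) (acc + \sum_(x <- l) g x) ((k + 1) * size l) 0 0.
Proof.
move=> H; elim: l acc => [|x l IH] acc /=.
  rewrite big_nil addr0; exact: spec_weak (spec_ret _) _ _ _.
apply: spec_weak.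
  apply: spec_bind (H x) _. apply: spec_bind (spec_prim _) _.
  rewrite big_cons addrA. exact: IH.
all: lia.
Qed.

Lemma spec_sumOrd (R : realType) n (f : 'I_n -> M R) (g : 'I_n -> R) k :
  (forall i, spec (f i) (g i) k 0 0) ->
  spec (sumOrd f) (\sum_(i < n) g i) ((k + 1) * n) 0 0.
Proof.
move=> H; rewrite /sumOrd.
have := @spec_sumL R _ f g k (enum 'I_n) 0 H.
rewrite add0r size_enum_ord big_enum /=. done.
Qed.

Lemma spec_tab (R : realType) n (f : 'I_n -> M R) (g : 'I_n -> R) k p :
  (forall i, spec (f i) (g i) k 0 p) ->
  spec (tabulate f) (\row_i g i) (k * n) n (n + p).
Proof.
move=> H; rewrite /tabulate.
apply: spec_weak.
  apply: spec_bind (spec_alloc n) _.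
  apply: spec_bind (spec_mapM (enum 'I_n) H) _.
  have -> : \row_i g i = \row_i nth 0 (map g (enum 'I_n)) i.
    apply/rowP => i; rewrite !mxE (nth_map i) ?size_enum_ord //.
    by rewrite nth_ord_enum.
  exact: spec_ret.
all: rewrite ?size_enum_ord; lia.
Qed.

Lemma spec_bind' A B (m : M A) (f : A -> M B) a b k1 d1 p1 k2 d2 p2 k d p :
  spec m a k1 d1 p1 -> spec (f a) b k2 d2 p2 ->
  (k1 + k2 <= k)%N -> (d1 + d2)%N = d -> (maxn p1 (d1 + p2) <= p)%N ->
  spec (bind m f) b k d p.
Proof. move=> H1 H2 hk hd hp; exact: spec_weak (spec_bind H1 H2) hk hd hp. Qed.

Ltac side := first [ exact: leqnn | reflexivity | (by []) | lia | match goal with |- ?G => idtac "SIDEFAIL" G; fail 2 end ].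
Ltac sb := cbv beta zeta.
Lemma gc_spec (R : realType) D Y (P : RFModel R D Y) tau T x : (0 < D)%N -> (0 < Y)%N ->
  exists v k dl p, spec (GradComp P tau T x) v k dl p /\
   v = grad_formula P tau T x /\
   (k <= 20 * (D * (Y + D)))%N /\ (p <= 20 * (D + Y))%N.
Proof.
move=> hD hY.
do 4 eexists; split.
  rewrite /GradComp.
  eapply spec_bind'.
  - apply: spec_tab => j. exact: spec_prim.
  - sb. eapply spec_bind'.
    + rewrite /RF_core. eapply spec_bind'.
      * apply: spec_tab => a. apply: spec_sumOrd => j.
        eapply spec_bind'; [exact: spec_prim | sb; exact: spec_prim | side..].
      * sb. eapply spec_bind'; [apply: spec_tab => a; exact: spec_prim | exact: spec_ret | side..].
      * side.
      * side.
      * side.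
    + sb. eapply spec_bind'.
      * apply: spec_tab => i. eapply spec_free_pat.
        -- apply: spec_tab => a.
           eapply spec_bind'; [exact: spec_prim | sb; eapply spec_bind'; [exact: spec_prim | sb; exact: spec_prim |side..] |side..].
        -- apply: spec_sumOrd => a. exact: spec_prim.
      * sb. eapply spec_bind'.
        -- apply: spec_tab => i. eapply spec_free_pat.
           ++ apply: spec_tab => j. exact: spec_prim.
           ++ apply: spec_sumOrd => j. exact: spec_prim.
        -- sb. eapply spec_bind'.
           ++ apply: spec_sumOrd => a. exact: spec_prim.
           ++ sb. eapply spec_bind'; [exact: spec_prim | sb; eapply spec_bind'; [exact: spec_prim | sb; apply: spec_tab => i; exact: spec_prim |side..] |side..].
           ++ side.
           ++ side.
           ++ side.
        -- side.
        -- side.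
        -- side.
      * side.
      * side.
      * side.
    + side.
    + side.
    + side.
  - side.
  - side.
  - side.
split.
  apply/rowP => i; rewrite !mxE /=.
  have E : forall a, \sum_(j < D) rf_omega P tau a j * (\row_i rf_g P x 0 i) 0 j
     = \sum_(j < D) rf_omega P tau a j * rf_g P x 0 j.
    by move=> a; apply: eq_bigr => j _; rewrite mxE.
  congr (- rf_dQ P _ * _).
    by apply: eq_bigr => a _; rewrite !mxE E.
  apply: eq_bigr => j _; rewrite !mxE; congr (_ * _).
  by apply: eq_bigr => a _; rewrite !mxE E.
rewrite !addn0 !add0n !mul1n !maxnn.
split; nia.
Qed.


Theorem proposition4 :
  exists c : nat,
    forall (R : realType) (D Y : nat), (0 < D)%N -> (0 < Y)%N ->
    forall (P : RFModel R D Y) (tau : nat) (T : 'rV[R]_Y) (x : 'rV[R]_D),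
      let res := run (GradComp P tau T x) in
      [/\ res.1 = grad_formula P tau T x,
          (ops res.2 <= c * (D * (Y + D)))%N
        & (peak res.2 <= c * (D + Y))%N].
Proof.
exists 20 => R D Y hD hY P tau T x /=.
have [v [k [dl [p [H [hv [hk hp]]]]]]] := gc_spec P tau T x hD hY.
case: (H (CState 0 0 0) (leqnn 0)) => /= h1 h2 _ h3 _.
rewrite /run; split.
- by rewrite h1 hv.
- exact: leq_trans h2 hk.
- rewrite max0n add0n in h3; exact: leq_trans h3 hp.
Qed.
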